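(* For $1\le k\le n-1$, $\ell(w_k)=2k$, and for $1\le j,k\le n-1$ with $j\ne k$, $\ell(w_j\cdot w_k)=\ell(w_j)+\ell(w_k)=2(j+k)$.
   Context: $D_n$ ($n\ge2$) is the Coxeter group with generators $s_{1'},s_1,\dots,s_{n-1}$ and relations $s^2=1$, $(s_i s_{i+1})^3=1$, $(s_is_j)^2=1$ for $|i-j|\ge 2$, $(s_{1'}s_2)^3=1$, $(s_{1'}s_i)^2=1$ for $i\ne 2$. $\ell$ denotes Coxeter length with respect to $\{s_{1'},s_1,\dots,s_{n-1}\}$. $w_k=s_k s_{k-1}\cdots s_2 s_1 s_{1'} s_2\cdots s_k$. *)

(* Defs.v *)
(* The Coxeter group D_n is encoded by its presentation:
   elements are words in the generators modulo the congruence generated by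
   the Coxeter relations.  Generators are labelled by naturals < n:
   label 0 = s_{1'}, label i (1 <= i <= n-1) = s_i. *)
From mathcomp Require Import all_boot.
Set Implicit Arguments. Unset Strict Implicit. Unset Printing Implicit Defensive.

Definition coxD_m (a b : nat) : nat :=
  if a == b then 1
  else if (a == 0) then (if b == 2 then 3 else 2)
  else if (b == 0) then (if a == 2 then 3 else 2)
  else if (a == b.+1) || (b == a.+1) then 3 else 2.

Definition altword (a b m : nat) : seq nat := flatten (nseq m [:: a; b]).

Inductive coxD_eq (n : nat) : seq nat -> seq nat -> Prop :=
  | coxD_refl w : coxD_eq n w w
  | coxD_sym u v : coxD_eq n u v -> coxD_eq n v u
  | coxD_trans u v w : coxD_eq n u v -> coxD_eq n v w -> coxD_eq n u w
  | coxD_rel u v a b : a < n -> b < n ->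
      coxD_eq n (u ++ altword a b (coxD_m a b) ++ v) (u ++ v).

Definition coxD_length (n : nat) (w : seq nat) (m : nat) : Prop :=
  (exists w', coxD_eq n w w' /\ size w' = m) /\
  (forall w', coxD_eq n w w' -> m <= size w').

(* w_k = s_k s_{k-1} ... s_2 s_1 s_{1'} s_2 ... s_k *)
Definition wk (k : nat) : seq nat :=
  [seq k - i | i <- iota 0 k] ++ [:: 0] ++ iota 2 k.-1.

(* Main.v *)
Require Import Defs.
From mathcomp Require Import all_boot all_algebra zify.
Import GRing.Theory Num.Theory.
Set Implicit Arguments. Unset Strict Implicit. Unset Printing Implicit Defensive.

Definition F (a b : int) : nat := nat_of_bool (b < a)%R + nat_of_bool (a + b < 0)%R.
Ltac bc := repeat match goal with |- context [(?x < ?y)%R] => case: (boolP (x < y)%R) => ? end; simpl; lia.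
Lemma F_swap a b : F b a <= F a b + 1.
Proof. rewrite /F; bc. Qed.
Lemma F_neg a b : F (-a) b = F a b.
Proof. rewrite /F; bc. Qed.
Lemma F_flip a b : F (-b) (-a) <= F a b + 1.
Proof. rewrite /F; bc. Qed.

Definition P (a : int) (l : seq int) : nat := sumn (map (F a) l).
Fixpoint S (l : seq int) : nat := if l is a :: r then P a r + S r else 0.

Definition flip (l : seq int) := if l is a :: b :: r then (-b)%R :: (-a)%R :: r else l.
Fixpoint sw (m : nat) (l : seq int) {struct l} : seq int :=
  match m, l with
  | 0, a :: b :: r => b :: a :: r
  | m'.+1, a :: r => a :: sw m' r
  | _, _ => l end.
Definition gen (a : nat) l := if a is m.+1 then sw m l else flip l.
Definition act (u : seq nat) l := foldr gen l u.

Lemma size_sw m l : size (sw m l) = size l.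
Proof. elim: l m => [|a l IH] [|m] //=; first by case: l {IH}.
by rewrite IH. Qed.
Lemma size_flip l : size (flip l) = size l.
Proof. by case: l => [|a [|b r]]. Qed.
Lemma size_gen a l : size (gen a l) = size l.
Proof. case: a => [|m] /=; last exact: size_sw. by case: l => [|a [|b r]]. Qed.
Lemma size_act u l : size (act u l) = size l.
Proof. elim: u => //= a u IH; by rewrite size_gen. Qed.

Lemma sw_inv m l : sw m (sw m l) = l.
Proof. elim: l m => [|a l IH] [|m] //=; first by case: l {IH}.
by rewrite IH. Qed.
Lemma flip_inv l : flip (flip l) = l.
Proof. by case: l => [|a [|b r]] //=; rewrite !opprK. Qed.
Lemma gen_inv a l : gen a (gen a l) = l.
Proof. case: a => [|m] /=; [exact: flip_inv| exact: sw_inv]. Qed.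

Lemma sw_comm i j l : i.+1 < j -> sw i (sw j l) = sw j (sw i l).
Proof.
elim: i j l => [|i IH] j l Hj.
  case: j Hj => [|[|j]] // _. by case: l => [|a [|b r]].
case: j Hj => [|j] Hj //. case: l => [|a r] //=. by rewrite IH.
Qed.
Lemma sw_braid i l : i.+2 < size l -> sw i (sw i.+1 (sw i l)) = sw i.+1 (sw i (sw i.+1 l)).
Proof.
elim: i l => [|i IH] l.
  by case: l => [|a [|b [|c r]]] //=.
case: l => [|a r] //= H. by rewrite IH.
Qed.
Lemma flip_sw0 l : flip (sw 0 l) = sw 0 (flip l).
Proof. by case: l => [|a [|b r]]. Qed.
Lemma flip_sw m l : flip (sw m.+2 l) = sw m.+2 (flip l).
Proof. by case: l => [|a [|b r]]. Qed.
Lemma flip_braid l : 2 < size l -> flip (sw 1 (flip l)) = sw 1 (flip (sw 1 l)).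
Proof. by case: l => [|a [|b [|c r]]] //= _; rewrite opprK. Qed.

Lemma act_cat u v l : act (u ++ v) l = act u (act v l).
Proof. by rewrite /act foldr_cat. Qed.

Lemma act_alt2 a b l : gen a (gen b l) = gen b (gen a l) ->
  act (altword a b 2) l = l.
Proof. move=> H. rewrite /altword /= H. by rewrite !gen_inv. Qed.
Lemma act_alt3 a b l : gen a (gen b (gen a (gen b (gen a (gen b l))))) =
   gen b (gen a (gen b (gen b (gen a (gen b l))))) ->
  act (altword a b 3) l = l.
Proof. move=> H. rewrite /altword /= H. by rewrite gen_inv (gen_inv a) gen_inv. Qed.

Lemma act_rel n a b l : a < n -> b < n -> size l = n ->
  act (altword a b (coxD_m a b)) l = l.
Proof.
move=> Ha Hb Hl; rewrite /coxD_m.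
case: eqP => [<-|Hab]. by rewrite /altword /= gen_inv.
case: eqP => [Ha0|Ha0].
  subst a; case: eqP => [Hb2|Hb2].
    subst b; apply: act_alt3 => /=; rewrite flip_braid //; last by rewrite !(size_sw, size_flip); lia.
  apply: act_alt2; case: b Hab Hb2 {Hb} => [|[|b]] //= _ Hb2.
    by rewrite flip_sw0.
  by case: b Hb2 => [|b] // _; rewrite flip_sw.
case: eqP => [Hb0|Hb0].
  subst b; case: eqP => [Ha2|Ha2].
    subst a; apply: act_alt3 => /=; rewrite -flip_braid //; last by rewrite !(size_sw, size_flip); lia.
  apply: act_alt2; case: a Hab Ha2 {Ha} Ha0 => [|[|a]] //= _ Ha2 _.
    by rewrite flip_sw0.
  by case: a Ha2 => [|a] // _; rewrite flip_sw.
case: a Ha Hab Ha0 => [|a] // Ha Hab _.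
case: b Hb Hab Hb0 => [|b] // Hb Hab _.
case: eqP => [[Ea]|Hab2]; first subst a.
  apply: act_alt3 => /=. rewrite sw_braid; last by rewrite !(size_sw, size_flip); lia.
  by rewrite !sw_inv.
case: eqP => [[Eb]|Hab3]; first subst b.
  apply: act_alt3 => /=. rewrite -sw_braid; last by rewrite !(size_sw, size_flip); lia.
  by rewrite !sw_inv.
apply: act_alt2 => /=.
have [hlt|hlt] := ltnP a b.
  rewrite sw_comm ?sw_inv //. lia.
rewrite -(@sw_comm b a) ?sw_inv //. lia.
Qed.

Lemma act_eq n u v : coxD_eq n u v -> forall l, size l = n -> act u l = act v l.
Proof.
elim=> {u v} [w|u v _ IH|u v w _ IH1 _ IH2|u v a b Ha Hb] l Hl //.
- by rewrite IH.
- by rewrite IH1 // IH2.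
- rewrite !act_cat (@act_rel n) //. by rewrite size_act.
Qed.

Lemma P_cat a p q : P a (p ++ q) = P a p + P a q.
Proof. by rewrite /P map_cat sumn_cat. Qed.
Lemma P_neg a l : P (-a) l = P a l.
Proof. by rewrite /P; elim: l => //= b l ->; rewrite F_neg. Qed.
Lemma P_sw a m l : P a (sw m l) = P a l.
Proof.
elim: l m => [|b l IH] [|m] //=.
  case: l {IH} => [|c r] //=. rewrite /P /=. lia.
rewrite /P /= -/(P a _) IH. done.
Qed.
Lemma S_sw m l : S (sw m l) <= S l + 1.
Proof.
elim: l m => [|b l IH] [|m] //=.
  case: l {IH} => [|c r] //=. rewrite /P /= -/(P b r) -/(P c r).
  have := F_swap b c. lia.
rewrite P_sw. have := IH m. lia.
Qed.
Lemma S_flip l : S (flip l) <= S l + 1.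
Proof.
case: l => [|a [|b r]] //=. rewrite /P /= -!/(P _ r) !P_neg.
have := F_flip a b. lia.
Qed.
Lemma S_gen a l : S (gen a l) <= S l + 1.
Proof. case: a => [|m]; [exact: S_flip | exact: S_sw]. Qed.
Lemma S_act u l : S (act u l) <= size u + S l.
Proof. elim: u => //= a u IH. have := S_gen a (act u l). lia. Qed.

Fixpoint negat (i : nat) (l : seq int) {struct l} : seq int :=
  match i, l with
  | _, [::] => [::]
  | 0, a :: r => (- a)%R :: r
  | i'.+1, a :: r => a :: negat i' r end.

Lemma negat_comm i j l : negat i (negat j l) = negat j (negat i l).
Proof. elim: l i j => [|a l IH] [|i] [|j] //=; by rewrite IH. Qed.
Lemma negat_inv i l : negat i (negat i l) = l.
Proof. elim: l i => [|a l IH] [|i] //=; by rewrite ?opprK ?IH. Qed.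
Lemma sw_negat0 k l : sw k.+1 (negat 0 l) = negat 0 (sw k.+1 l).
Proof. by case: l. Qed.
Lemma sw_negat k l : k.+1 < size l -> sw k (negat k (sw k l)) = negat k.+1 l.
Proof.
elim: k l => [|k IH] l.
  by case: l => [|a [|b r]].
case: l => [|a r] //= H. by rewrite IH.
Qed.

Lemma act_cons a u l : act (a :: u) l = gen a (act u l).
Proof. by []. Qed.
Lemma wkS k : 0 < k -> wk k.+1 = k.+1 :: wk k ++ [:: k.+1].
Proof.
move=> Hk; rewrite /wk.
have -> : iota 0 k.+1 = 0 :: map succn (iota 0 k) by rewrite /=; congr (_ :: _); rewrite (iotaDl 1 0).
rewrite /=.
have -> : [seq (k.+1 - i)%N | i <- [seq succn i | i <- iota 0 k]] = [seq (k - i)%N | i <- iota 0 k].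
  by rewrite -map_comp; apply: eq_map => i /=; rewrite subSS.
rewrite subn0 -catA /=.
case: k Hk => [|k] // _.
have E : iota 2 k.+1 = iota 2 k ++ [:: k.+2] by have := iotaD 2 k 1; rewrite addn1.
by rewrite E.
Qed.

Lemma act_wk k l : 0 < k -> k < size l -> act (wk k) l = negat 0 (negat k l).
Proof.
elim: k l => [|k IH] l // _ Hs.
case: k IH Hs => [|k] IH Hs.
  rewrite /wk /=. by case: l Hs => [|a [|b r]].
rewrite wkS // act_cons act_cat.
have -> : act [:: k.+2] l = sw k.+1 l by [].
rewrite IH //; last by rewrite size_sw; lia.
by rewrite /gen sw_negat0 sw_negat.
Qed.

Definition Lpos (s m : nat) : seq int := [seq (Posz i) | i <- iota s m].
Definition cnt (l : seq int) := count (fun b => (b < 0)%R) l.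

Lemma size_Lpos s m : size (Lpos s m) = m.
Proof. by rewrite size_map size_iota. Qed.
Lemma Lpos_split s a m : Lpos s (a + m.+1) = Lpos s a ++ Posz (s + a) :: Lpos (s + a).+1 m.
Proof. by rewrite /Lpos iotaD map_cat. Qed.
Lemma Lpos_S s m : Lpos s m.+1 = Posz s :: Lpos s.+1 m.
Proof. by []. Qed.
Lemma all_Lpos (p : pred int) s m : (forall i, s <= i < s + m -> p (Posz i)) -> all p (Lpos s m).
Proof. move=> H; rewrite all_map; apply/allP => i; rewrite mem_iota => /H. done. Qed.
Lemma cnt_Lpos s m : cnt (Lpos s m) = 0.
Proof. rewrite /cnt; apply/eqP; rewrite -leqn0 leqNgt -has_count; apply/hasPn => b /mapP [i _ ->]. by []. Qed.
Lemma cnt_cat p q : cnt (p ++ q) = cnt p + cnt q.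
Proof. by rewrite /cnt count_cat. Qed.
Lemma negat_catS p x q i : size p = i -> negat i (p ++ x :: q) = p ++ (- x)%R :: q.
Proof. move=> <-; by elim: p => //= a p ->. Qed.

Lemma PF a r : (0 <= a)%R -> all (fun b => (a < b) || (b < - a))%R r -> P a r = 2 * cnt r.
Proof.
move=> Ha; elim: r => //= b r IH /andP [Hb Hr].
rewrite /P /= -/(P a r) IH // /cnt /= -/(cnt r).
have -> : F a b = 2 * nat_of_bool (b < 0)%R.
  move: Hb; rewrite /F. case/orP => Hb; bc.
lia.
Qed.

Lemma S_Lpos_cat s m r : all (fun b => (Posz (s + m) <= b) || (b <= - Posz (s + m)))%R r ->
  S (Lpos s m ++ r) = 2 * m * cnt r + S r.
Proof.
elim: m s => [|m IH] s H. by rewrite muln0 mul0n.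
rewrite Lpos_S /= P_cat (PF (a:=Posz s)) //; last first.
  apply: all_Lpos => i Hi; apply/orP; left; lia.
rewrite (PF (a := Posz s)) //; last first.
  apply: sub_all H => b /orP [] Hb; apply/orP; [left|right]; lia.
rewrite cnt_Lpos IH; last by rewrite addSnnS.
lia.
Qed.

Lemma S_Lpos s m : S (Lpos s m) = 0.
Proof. by have := @S_Lpos_cat s m [::] isT; rewrite cats0 /cnt /= muln0. Qed.

Lemma cnt_cons a l : cnt (a :: l) = nat_of_bool (a < 0)%R + cnt l.
Proof. by []. Qed.
Lemma S_cons a l : S (a :: l) = P a l + S l.
Proof. by []. Qed.

Ltac sall1 := first [ done | (apply: all_Lpos => i Hi; apply/orP; first [by left; lia | by right; lia]) | (apply/orP; first [by left; lia | by right; lia]) | lia ].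
Ltac sall := rewrite ?all_cat /=; first [ (apply/andP; split; sall) | sall1 ].

Lemma S1 n k : 1 <= k -> k < n -> S (negat 0 (negat k (Lpos 1 n))) = 2 * k.
Proof.
move=> H1 H2.
have E1 : Lpos 1 n = Lpos 1 k ++ Posz (1 + k) :: Lpos (1 + k).+1 (n - k - 1).
  by rewrite -Lpos_split; congr Lpos; lia.
rewrite E1 negat_catS ?size_Lpos //.
case: k H1 H2 E1 => [|k] // _ H2 E1.
rewrite Lpos_S /= P_neg PF //; last first.
  sall.
rewrite S_Lpos_cat; last first.
  sall.
rewrite S_cons P_neg PF //; last by sall.
rewrite S_Lpos cnt_cat !cnt_cons !cnt_Lpos.
have -> : ((- Posz (1 + k.+1)) < 0)%R = true by lia.
simpl; lia.
Qed.

Lemma S2 n j k : 1 <= j -> j < k -> k < n -> S (negat j (negat k (Lpos 1 n))) = 2 * (j + k).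
Proof.
move=> H1 H2 H3.
have E1 : Lpos 1 n = Lpos 1 k ++ Posz (1 + k) :: Lpos (1 + k).+1 (n - k - 1).
  by rewrite -Lpos_split; congr Lpos; lia.
have E2 : Lpos 1 k = Lpos 1 j ++ Posz (1 + j) :: Lpos (1 + j).+1 (k - j - 1).
  by rewrite -Lpos_split; congr Lpos; lia.
rewrite E1 negat_catS ?size_Lpos // E2 -catA /= negat_catS ?size_Lpos //.
rewrite S_Lpos_cat; last first.
  sall.
rewrite S_cons P_neg PF //; last first.
  sall.
rewrite S_Lpos_cat; last first.
  sall.
rewrite S_cons P_neg PF //; last by sall.
rewrite S_Lpos !cnt_cons !cnt_cat !cnt_cons !cnt_Lpos.
have -> : ((- Posz (1 + k)) < 0)%R = true by lia.
have -> : ((- Posz (1 + j)) < 0)%R = true by lia.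
simpl; lia.
Qed.

Lemma size_wk k : 1 <= k -> size (wk k) = 2 * k.
Proof. move=> Hk; rewrite /wk !size_cat size_map !size_iota /=. lia. Qed.

Theorem mainTheorem11 (n : nat) (hn : 2 <= n) :
  (forall k, 1 <= k <= n.-1 -> coxD_length n (wk k) (2 * k)) /\
  (forall j k, 1 <= j <= n.-1 -> 1 <= k <= n.-1 -> j != k ->
     exists lj lk,
       [/\ coxD_length n (wk j) lj, coxD_length n (wk k) lk,
           coxD_length n (wk j ++ wk k) (lj + lk) & lj + lk = 2 * (j + k)]).
Proof.
pose y0 := Lpos 1 n.
have Hy0 : size y0 = n by rewrite size_Lpos.
have low : forall u w', coxD_eq n u w' -> S (act u y0) <= size w'.
  move=> u w' H; rewrite (act_eq H Hy0).
  have := S_act w' y0; rewrite S_Lpos; lia.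
have len1 : forall k, 1 <= k <= n.-1 -> coxD_length n (wk k) (2 * k).
  move=> k /andP [H1 H2]; split.
    exists (wk k); split; [exact: coxD_refl | exact: size_wk].
  move=> w' H; have := low _ _ H; rewrite act_wk ?Hy0; last by lia.
    by rewrite (@S1 n k) //; lia.
  done.
split=> // j k Hj Hk Hjk; exists (2 * j), (2 * k); split => //; try exact: len1.
split.
  exists (wk j ++ wk k); split; first exact: coxD_refl.
  move: Hj Hk => /andP [? ?] /andP [? ?].
  rewrite size_cat !size_wk //; lia.
move: Hj Hk => /andP [? ?] /andP [? ?].
move=> w' H; have := low _ _ H.
rewrite act_cat act_wk; [| lia | rewrite size_act Hy0; lia].
rewrite act_wk; [| lia | rewrite Hy0; lia].
rewrite (negat_comm j 0) negat_inv.
case: (ltngtP j k) => Hjk2.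
- by rewrite (@S2 n j k) //; lia.
- by rewrite negat_comm (@S2 n k j) //; lia.
- by rewrite Hjk2 eqxx in Hjk.
lia.
Qed.
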